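(* Let $\psi\in C^3(\mathbb{R})$ be a known link, $\beta_c\in\mathbb{R}^p$ with $\mathbb{E}[Y_i(0)\mid X_i=x]=\psi(x^\top\beta_c)$, $\hat\beta_c\in\mathbb{R}^p$ any estimate, and $\gamma\in\mathbb{R}^{n_c}$ weights with $\gamma_i\ge0$, $\sum_{i:W_i=0}\gamma_i=1$. Suppose there are $u_n>0$, $M_2,M_3>0$ with $\sup_{|z|\le u_n}|\psi''(z)|\le M_2\log p$, $\sup_{|z|\le u_n}|\psi'''(z)|\le M_3\sqrt{n/\log p}$, and $\max_{i\le n}|X_i^\top\beta_c|\le u_n$, $\max_{i\le n}|X_i^\top\hat\beta_c|\le u_n$. Writing $\delta=\hat\beta_c-\beta_c$, there is an absolute constant $C>0$ such that \begin{align*} |\hat\mu_c-\mu_c|&\le \Big\|\tfrac{1}{n_t}X_t^\top\psi'(X_t\hat\beta_c)-X_c^\top W_c(\hat\beta_c)\gamma\Big\|_\infty\|\delta\|_1\\ &\quad+\Big\|\tfrac{1}{n_t}(X_t^\top\otimes X_t^\top)\operatorname{vec}(W_t'(\hat\beta_c))-[V_1,\dots,V_{n_c}]\gamma\Big\|_\infty\|\delta\|_1^2+|\gamma^\top\varepsilon_c|\\ &\quad+C\Big(M_2\log p\,(\|X_t\|_\infty^2+\|X_c\|_\infty^2)\|\delta\|_1^2+M_3\sqrt{\tfrac{n}{\log p}}\,(\|X_t\|_\infty^3+\|X_c\|_\infty^3)\|\delta\|_1^3\Big). \end{align*}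
   Context: Setting: $n$ units with covariates $X_i\in\mathbb{R}^p$, treatment $W_i\in\{0,1\}$, potential outcomes $Y_i(0),Y_i(1)$, observed $Y_i^{\rm obs}=Y_i(W_i)$; $n_t,n_c$ numbers of treated/control units; $X_t\in\mathbb{R}^{n_t\times p}$, $X_c\in\mathbb{R}^{n_c\times p}$ treated/control covariate matrices, with $X_{c,i}$ the $i$-th control row. Functions of vectors ($\psi'(v)$ etc.) act componentwise. $W_c(\beta)=\operatorname{diag}(\psi'(X_c\beta))$, $W_t'(\beta)=\operatorname{diag}(\psi''(X_t\beta))$, and $V_i=\psi''(X_{c,i}^\top\hat\beta_c)\,X_{c,i}\otimes X_{c,i}\in\mathbb{R}^{p^2}$, so $[V_1,\dots,V_{n_c}]\in\mathbb{R}^{p^2\times n_c}$. $\mu_c=\frac1{n_t}\sum_{i:W_i=1}\psi(X_i^\top\beta_c)$, $\hat\mu_c=\frac1{n_t}\sum_{i:W_i=1}\psi(X_i^\top\hat\beta_c)+\sum_{i:W_i=0}\gamma_i(Y_i^{\rm obs}-\psi(X_i^\top\hat\beta_c))$, $\varepsilon_c=(Y_i(0)-\psi(X_i^\top\beta_c))_{i:W_i=0}$. For matrices $\|A\|_\infty=\max_{i,j}|A_{ij}|$; $\operatorname{vec}$ stacks columns; $\otimes$ is the Kronecker product. *)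

(* Defs.v *)
From HB Require Import structures.
From mathcomp Require Import all_boot all_order all_algebra.
From mathcomp Require Import all_classical all_reals all_analysis.
From mathcomp Require Import mxtens.
Import numFieldNormedType.Exports.
Set Implicit Arguments. Unset Strict Implicit. Unset Printing Implicit Defensive.
Import Order.TTheory GRing.Theory Num.Theory.
Local Open Scope ring_scope.

Section Defs.
Variable R : realType.

Definition C3 (psi : R -> R) : Prop :=
  (forall x : R, derivable psi x 1) /\
  (forall x : R, derivable (derive1 psi) x 1) /\
  (forall x : R, derivable (derive1 (derive1 psi)) x 1) /\
  continuous (derive1 (derive1 (derive1 psi))).

Definition mxnorm_inf m n (A : 'M[R]_(m, n)) : R :=
  \big[Num.max/0]_(i < m) \big[Num.max/0]_(j < n) `|A i j|.

Definition norm1 p (v : 'cV[R]_p) : R := \sum_(i < p) `|v i 0|.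

Definition appf m n (f : R -> R) (v : 'M[R]_(m, n)) : 'M[R]_(m, n) := map_mx f v.

(* vec: stacks the columns of A : 'M_(m,n) into a column vector of size n*m
   (entry (j-th column block, i-th row) = A i j), compatible with the
   Kronecker product tensmx (A *t B) of mxtens. *)
Definition vecmx m n (A : 'M[R]_(m, n)) : 'cV[R]_(n * m) :=
  \col_k A (mxtens_unindex k).2 (mxtens_unindex k).1.

Definition Wdiag m (f : R -> R) (v : 'cV[R]_m) : 'M[R]_m :=
  diag_mx (appf f v)^T.

Definition Vmat (psi2 : R -> R) nc p (Xc : 'M[R]_(nc, p)) (bh : 'cV[R]_p)
  : 'M[R]_(p * p, nc) :=
  \matrix_(k, i) (psi2 ((Xc *m bh) i 0) *: ((row i Xc)^T *t (row i Xc)^T)) k 0.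

Definition mu_c nt p (psi : R -> R) (Xt : 'M[R]_(nt, p)) (bc : 'cV[R]_p) : R :=
  nt%:R^-1 * \sum_(i < nt) psi ((Xt *m bc) i 0).

Definition muhat_c nt nc p (psi : R -> R) (Xt : 'M[R]_(nt, p)) (Xc : 'M[R]_(nc, p))
  (Yc : 'cV[R]_nc) (gam : 'cV[R]_nc) (bh : 'cV[R]_p) : R :=
  nt%:R^-1 * \sum_(i < nt) psi ((Xt *m bh) i 0)
  + \sum_(i < nc) gam i 0 * (Yc i 0 - psi ((Xc *m bh) i 0)).

End Defs.

(* Main.v *)
Require Import Defs.
From HB Require Import structures.
From mathcomp Require Import all_boot all_order all_algebra.
From mathcomp Require Import all_classical all_reals all_analysis.
From mathcomp Require Import mxtens.
From mathcomp Require Import ring lra.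
Import numFieldNormedType.Exports.
Import Order.TTheory GRing.Theory Num.Theory.
Local Open Scope ring_scope.

Lemma mvt_gen (R : realType) (f : R -> R) (x y : R) :
  (forall z, derivable f z 1) ->
  exists2 c, (forall u, `|x| <= u -> `|y| <= u -> `|c| <= u) /\ `|c - x| <= `|y - x|
           & f y - f x = derive1 f c * (y - x).
Proof.
move=> df.
have hd : forall z : R, is_derive z (1:R) f (derive1 f z).
  by move=> z; rewrite derive1E; apply: derivableP.
have [xy|yx] := leP x y.
  have [c] := MVT_segment xy (fun z _ => hd z) (derivable_within_continuous (i:=`[x, y]) (fun z _ => df z)).
  rewrite in_itv /= => /andP[h1 h2] ->; exists c => //; split.
    by move=> u; rewrite !ler_norml => /andP[? ?] /andP[? ?]; apply/andP; split; lra.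
  by rewrite !ger0_norm; lra.
have yx' := ltW yx.
have [c] := MVT_segment yx' (fun z _ => hd z) (derivable_within_continuous (i:=`[y, x]) (fun z _ => df z)).
rewrite in_itv /= => /andP[h1 h2] E; exists c.
  split.
    by move=> u; rewrite !ler_norml => /andP[? ?] /andP[? ?]; apply/andP; split; lra.
  by rewrite !ler0_norm; lra.
by rewrite -opprB E -mulrN opprB.
Qed.

Lemma taylor2 (R : realType) (f : R -> R) (un M a b : R) :
  (forall x, derivable f x 1) -> (forall x, derivable (derive1 f) x 1) ->
  (forall z, `|z| <= un -> `|derive1 (derive1 f) z| <= M) -> `|a| <= un -> `|b| <= un ->
  `|f b - f a - derive1 f a * (b - a)| <= M * (b - a) ^+ 2.
Proof.
move=> df ddf hM ha hb.
have [c [cu ca] ->] := @mvt_gen _ f a b df.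
rewrite -mulrBl.
have [d [du da] ->] := @mvt_gen _ _ a c ddf.
have hc := cu _ ha hb.
have hd := du _ ha hc.
rewrite !normrM -real_normK ?num_real // expr2 mulrA.
apply: ler_pM => //.

apply: ler_pM => //; exact: hM.
Qed.

Section Helpers.
Variable R : realType.

Lemma le_bigmax0 n (F : 'I_n -> R) i : F i <= \big[Num.max/0]_(j < n) F j.
Proof.
rewrite unlock; have : i \in index_enum 'I_n by rewrite mem_index_enum.
elim: (index_enum _) => //= a s IH; rewrite inE => /orP[/eqP <-|/IH h].
  by rewrite le_max lexx.
by rewrite le_max h orbT.
Qed.

Lemma bigmax0_ge0 n (F : 'I_n -> R) : 0 <= \big[Num.max/0]_(j < n) F j.
Proof. by rewrite unlock; elim: (index_enum _) => //= a s IH; rewrite le_max IH orbT. Qed.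

Lemma mxnorm_ge m n (A : 'M[R]_(m, n)) i j : `|A i j| <= mxnorm_inf A.
Proof.
rewrite /mxnorm_inf; apply: (le_trans (le_bigmax0 _ (fun j => `|A i j|) j)).
exact: (le_bigmax0 _ (fun i => \big[Num.max/0]_(j < n) `|A i j|) i).
Qed.

Lemma mxnorm_ge0 m n (A : 'M[R]_(m, n)) : 0 <= mxnorm_inf A.
Proof. exact: bigmax0_ge0. Qed.

Lemma norm1_ge0 p (d : 'cV[R]_p) : 0 <= norm1 d.
Proof. by apply: sumr_ge0 => i _; rewrite normr_ge0. Qed.

Lemma dot_bound m p (v : 'M[R]_(p, m)) (k : 'I_m) (d : 'cV[R]_p) :
  `|\sum_(j < p) v j k * d j 0| <= mxnorm_inf v * norm1 d.
Proof.
rewrite /norm1 mulr_sumr; apply: le_trans (ler_norm_sum _ _ _) _.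
apply: ler_sum => j _; rewrite normrM; apply: ler_wpM2r => //.
exact: mxnorm_ge.
Qed.

Lemma rowdot_bound n p (X : 'M[R]_(n, p)) (i : 'I_n) (d : 'cV[R]_p) :
  `|(X *m d) i 0| <= mxnorm_inf X * norm1 d.
Proof.
rewrite mxE /norm1 mulr_sumr; apply: le_trans (ler_norm_sum _ _ _) _.
apply: ler_sum => j _; rewrite normrM; apply: ler_wpM2r => //.
exact: mxnorm_ge.
Qed.

Lemma sum_dot n p (X : 'M[R]_(n, p)) (w : 'I_n -> R) (d : 'cV[R]_p) :
  \sum_(j < p) (\sum_(i < n) X i j * w i) * d j 0 = \sum_(i < n) w i * (X *m d) i 0.
Proof.
under eq_bigr do rewrite mulr_suml.
rewrite exchange_big; apply: eq_bigr => i _.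
rewrite mxE mulr_sumr; apply: eq_bigr => j _; ring.
Qed.

Lemma mxsubE m n (A B : 'M[R]_(m, n)) i j : (A - B) i j = A i j - B i j.
Proof. by rewrite !mxE. Qed.

End Helpers.

Theorem theorem1 (R : realType) :
  exists C : R, 0 < C /\
  forall (p nt nc : nat) (psi : R -> R)
    (Xt : 'M[R]_(nt, p)) (Xc : 'M[R]_(nc, p))
    (Yc : 'cV[R]_nc) (gam : 'cV[R]_nc) (bc bh : 'cV[R]_p)
    (un M2 M3 : R),
  C3 psi ->
  (forall i, 0 <= gam i 0) -> \sum_(i < nc) gam i 0 = 1 ->
  0 < un -> 0 < M2 -> 0 < M3 ->
  (forall z : R, `|z| <= un -> `|derive1 (derive1 psi) z| <= M2 * ln p%:R) ->
  (forall z : R, `|z| <= un ->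
     `|derive1 (derive1 (derive1 psi)) z| <= M3 * Num.sqrt ((nt + nc)%:R / ln p%:R)) ->
  (forall i, `|(Xt *m bc) i 0| <= un) -> (forall i, `|(Xc *m bc) i 0| <= un) ->
  (forall i, `|(Xt *m bh) i 0| <= un) -> (forall i, `|(Xc *m bh) i 0| <= un) ->
  let n : R := (nt + nc)%:R in
  let delta := bh - bc in
  let epsc := Yc - appf psi (Xc *m bc) in
  `|muhat_c psi Xt Xc Yc gam bh - mu_c psi Xt bc| <=
    mxnorm_inf (nt%:R^-1 *: (Xt^T *m appf (derive1 psi) (Xt *m bh))
                - Xc^T *m Wdiag (derive1 psi) (Xc *m bh) *m gam) * norm1 delta
  + mxnorm_inf (nt%:R^-1 *: ((Xt^T *t Xt^T) *m vecmx (Wdiag (derive1 (derive1 psi)) (Xt *m bh)))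
                - Vmat (derive1 (derive1 psi)) Xc bh *m gam) * norm1 delta ^+ 2
  + `|(gam^T *m epsc) 0 0|
  + C * (M2 * ln p%:R * (mxnorm_inf Xt ^+ 2 + mxnorm_inf Xc ^+ 2) * norm1 delta ^+ 2
         + M3 * Num.sqrt (n / ln p%:R) * (mxnorm_inf Xt ^+ 3 + mxnorm_inf Xc ^+ 3)
             * norm1 delta ^+ 3).
Proof.
exists 1; split; first exact: ltr01.
move=> p nt nc psi Xt Xc Yc gam bc bh un M2 M3 hC3 gam0 gam1 un0 M20 M30 h2 h3
  htc hcc hth hch.
cbv zeta.
set n := (nt + nc)%:R. set delta := bh - bc. set epsc := Yc - appf psi (Xc *m bc).
case: hC3 => d1 [d2 _].
have M0 : 0 <= M2 * ln p%:R.
  by apply: le_trans (normr_ge0 _) (h2 0 _); rewrite normr0 ltW.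
set M := M2 * ln p%:R in h2 M0 *.
set ps1 := derive1 psi in d2 h2 *.
pose at_ i := (Xt *m bh) i 0. pose bt i := (Xt *m bc) i 0.
pose ac i := (Xc *m bh) i 0. pose bcc i := (Xc *m bc) i 0.
pose rt i := psi (bt i) - psi (at_ i) - ps1 (at_ i) * (bt i - at_ i).
pose rc i := psi (bcc i) - psi (ac i) - ps1 (ac i) * (bcc i - ac i).
have dt i : (Xt *m delta) i 0 = at_ i - bt i by rewrite /delta mulmxBr mxsubE.
have dc i : (Xc *m delta) i 0 = ac i - bcc i by rewrite /delta mulmxBr mxsubE.
have sq (x K : R) : `|x| <= K -> x ^+ 2 <= K ^+ 2.
  move=> hx; rewrite -real_normK ?num_real // !expr2.
  by apply: ler_pM => //; apply: le_trans hx.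
have hrt i : `|rt i| <= M * (mxnorm_inf Xt * norm1 delta) ^+ 2.
  apply: le_trans (@taylor2 _ psi un M (at_ i) (bt i) d1 d2 h2 (hth i) (htc i)) _.
  rewrite ler_wpM2l //; apply: sq.
  by rewrite -normrN opprB -dt rowdot_bound.
have hrc i : `|rc i| <= M * (mxnorm_inf Xc * norm1 delta) ^+ 2.
  apply: le_trans (@taylor2 _ psi un M (ac i) (bcc i) d1 d2 h2 (hch i) (hcc i)) _.
  rewrite ler_wpM2l //; apply: sq.
  by rewrite -normrN opprB -dc rowdot_bound.
set G := (X in mxnorm_inf X * norm1 delta + _).
set T2 := mxnorm_inf _ * norm1 delta ^+ 2.
set Z := M3 * _ * _ * _.
have T20 : 0 <= T2 by rewrite mulr_ge0 ?mxnorm_ge0 ?exprn_ge0 ?norm1_ge0.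
have Z0 : 0 <= Z.
  by rewrite !mulr_ge0 ?addr_ge0 ?exprn_ge0 ?norm1_ge0 ?mxnorm_ge0 ?sqrtr_ge0 // ltW.
have GE j : G j 0 = nt%:R^-1 * (\sum_i Xt i j * ps1 (at_ i))
                   - \sum_i Xc i j * (ps1 (ac i) * gam i 0).
  rewrite /G /Wdiag mul_mx_diag !mxE.
  have atE i : at_ i = \sum_k Xt i k * bh k 0 by rewrite /at_ mxE.
  have acE i : ac i = \sum_k Xc i k * bh k 0 by rewrite /ac mxE.
  congr (_ * _ - _); apply: eq_bigr => i _; by rewrite !mxE -?atE -?acE // mulrA.
have hL : \sum_j G j 0 * delta j 0 = nt%:R^-1 * (\sum_i ps1 (at_ i) * (at_ i - bt i))
                   - \sum_i (ps1 (ac i) * gam i 0) * (ac i - bcc i).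
  under eq_bigr => k _ do rewrite (GE k) mulrBl -mulrA.
  rewrite sumrB -mulr_sumr !sum_dot.
  by congr (_ * _ - _); apply: eq_bigr => i _; rewrite ?dt ?dc.
have hE : (gam^T *m epsc) 0 0 = \sum_i gam i 0 * (Yc i 0 - psi (bcc i)).
  by rewrite mxE; apply: eq_bigr => i _; rewrite /epsc mxsubE /appf [map_mx _ _ _ _]mxE [_^T _ _]mxE.
have key : muhat_c psi Xt Xc Yc gam bh - mu_c psi Xt bc =
   \sum_j G j 0 * delta j 0 + (\sum_i gam i 0 * rc i - nt%:R^-1 * \sum_i rt i)
   + (gam^T *m epsc) 0 0.
  rewrite hL hE /muhat_c /mu_c.
  have e1 : \sum_i psi ((Xt *m bh) i 0) = \sum_i psi (bt i)
      + \sum_i ps1 (at_ i) * (at_ i - bt i) - \sum_i rt i.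
    rewrite -big_split -sumrB; apply: eq_bigr => i _; rewrite /rt /= -/(at_ i); ring.
  have e2 : \sum_i gam i 0 * (Yc i 0 - psi ((Xc *m bh) i 0)) =
      - \sum_i (ps1 (ac i) * gam i 0) * (ac i - bcc i) + \sum_i gam i 0 * rc i
      + \sum_i gam i 0 * (Yc i 0 - psi (bcc i)).
    by rewrite -sumrN -!big_split; apply: eq_bigr => i _; rewrite /rc /= -/(ac i); ring.
  rewrite e1 e2; ring.
have hLb := @dot_bound _ _ _ G 0 delta.
have hQ : `|\sum_i gam i 0 * rc i - nt%:R^-1 * \sum_i rt i| <=
    M * (mxnorm_inf Xt ^+ 2 + mxnorm_inf Xc ^+ 2) * norm1 delta ^+ 2.
  apply: le_trans (ler_normB _ _) _.
  have q1 : `|\sum_i gam i 0 * rc i| <= M * (mxnorm_inf Xc * norm1 delta) ^+ 2.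
    apply: le_trans (ler_norm_sum _ _ _) _.
    apply: (@le_trans _ _ (\sum_i gam i 0 * (M * (mxnorm_inf Xc * norm1 delta) ^+ 2))).
      apply: ler_sum => i _; rewrite normrM ger0_norm //.
      by rewrite ler_wpM2l.
    by rewrite -mulr_suml gam1 mul1r.
  have q2 : `|nt%:R^-1 * \sum_i rt i| <= M * (mxnorm_inf Xt * norm1 delta) ^+ 2.
    rewrite normrM ger0_norm ?invr_ge0 ?ler0n //.
    have K0 : 0 <= M * (mxnorm_inf Xt * norm1 delta) ^+ 2 by rewrite mulr_ge0 ?sqr_ge0.
    apply: (@le_trans _ _ (nt%:R^-1 * (nt%:R * (M * (mxnorm_inf Xt * norm1 delta) ^+ 2)))).
      rewrite ler_wpM2l ?invr_ge0 ?ler0n //.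
      apply: le_trans (ler_norm_sum _ _ _) _.
      apply: le_trans (ler_sum _ (fun i _ => hrt i)) _.
      by rewrite sumr_const card_ord mulr_natl.
    case: (eqVneq (nt%:R : R) 0) => [->|nz]; first by rewrite invr0 mul0r.
    by rewrite mulKf.
  apply: le_trans (lerD q1 q2) _.
  rewrite !exprMn le_eqVlt; apply/orP; left; apply/eqP; ring.
rewrite key mul1r.
apply: le_trans (ler_normD _ _) _.
apply: le_trans (lerD (ler_normD _ _) (lexx _)) _.
move: hLb hQ T20 Z0.
set a := `|\sum_j _|. set b := `|_ - _|. set e := `|(gam^T *m epsc) 0 0|.
set g := mxnorm_inf G * norm1 delta.
set q := M * _ * _.
move=> *; lra.
Qed.
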